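(* Let $(\vec f,\vec\theta,\rho,\vec{\mathcal J})$ be a Definitional SMTO problem over a background theory $T$. Assume that $T$-satisfiability of quantifier-free formulas with uninterpreted functions is decidable, and that the SMT solver called in Algorithm 1 is a decision procedure for it, always returning SAT with a model or UNSAT. Assume further that every oracle function symbol $\theta_i$ has a finite domain, i.e. there are only finitely many tuples of input values on which $\theta_i$ can be applied. Then Algorithm 1 terminates on this problem.
   Context: Notation: for an expression $e$ with a free variable $x$, $e\cdot\{x\to t\}$ denotes proper substitution of $x$ by $t$. The symbol $\approx$ denotes equality. An oracle interface is a tuple $\mathcal I=(\vec y,\vec z,\alpha_{gen},\beta_{gen})$, where $\vec y$ and $\vec z$ are lists of sorted variables and $\alpha_{gen},\beta_{gen}$ are formulas whose free variables are among $\vec y,\vec z$. Its associated oracle maps tuples of values of the sorts of $\vec y$ to tuples of values of the sorts of $\vec z$. An oracle interface $\mathcal J$ defines an oracle function symbol $\theta$ if it has the form $((y_1,\dots,y_j),(z),\ \theta(y_1,\dots,y_j)\approx z,\ \text{true})$ and its associated oracle is functional, i.e. it always returns the same output on the same input; calling it on $\vec c$ with result $d$ generates the assumption $\theta(\vec c)\approx d$. A Definitional SMTO problem is a tuple $(\vec f,\vec\theta,\rho,\vec{\mathcal J})$, where $\vec f$ are ordinary function symbols, $\vec\theta=(\theta_1,\dots,\theta_n)$ are oracle function symbols, $\rho$ is a formula in background theory $T$ whose free function symbols are $\vec f\uplus\vec\theta$, and $\vec{\mathcal J}=(\mathcal J_1,\dots,\mathcal J_n)$ with $\mathcal J_i$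 defining $\theta_i$. Notation for the algorithm: $e[t]$ denotes an expression with a subterm $t$, and $e[s]$ denotes the result of replacing that subterm by $s$. $\langle t\rangle$ denotes partial evaluation of $t$, i.e. evaluating every subterm built from interpreted symbols applied to values; for example $\langle\theta(1+1)+1\rangle=\theta(2)+1$. $M|_{\vec f}$ is the restriction of a model $M$ to $\vec f$, and $\vec f^M$ is the interpretation of $\vec f$ in $M$. Algorithm 1 (SMTO). Initialize $A:=\text{true}$. Then repeat the following forever: 1. Call the SMT solver on $\rho\wedge A$, treating $\vec\theta$ as uninterpreted functions. If the result is UNSAT, return (UNSAT, $A$). 2. Otherwise, let $M$ be the model returned and set $\mu:=\langle\rho\cdot\{\vec f\to\vec f^M\}\rangle$. 3. While $\mu$ has the form $\mu[\theta_i(\vec c)]$ with $\vec c$ a tuple of values: - if $\theta_i(\vec c)\approx d$ is already in $A$ for some $d$, set $\mu:=\langle\mu[d]\rangle$; - otherwise call the oracle of $\mathcal J_i$ on $\vec c$ to obtain $d$, add $\theta_i(\vec c)\approx d$ to $A$, and set $\mu:=\langle\mu[d]\rangle$. 4. If $\mu$ is the formula true, return (SAT, $A$, $M|_{\vec f}$). Otherwise continue with the next iteration of the loop. *)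

(* Defs.v *)
From mathcomp Require Import all_boot.
Set Implicit Arguments.
Unset Strict Implicit.
Unset Printing Implicit Defensive.

Record theory := Theory {
  tsort  : eqType;
  tval   : eqType;
  sortOf : tval -> tsort;
  tsB    : tsort;
  tvtt   : tval;
  tvff   : tval;
  isym   : Type;
  isig   : isym -> seq tsort * tsort;       (* their (argument sorts, result sort) *)
  interp : isym -> seq tval -> tval
}.

Definition theory_ok (T : theory) : Prop :=
  [/\ sortOf (tvtt T) = tsB T, sortOf (tvff T) = tsB T, tvtt T != tvff T &
      forall g vs, map (@sortOf T) vs = (isig g).1 ->
                   sortOf (interp g vs) = (isig g).2].

(* TFun j ts : application of the ordinary function symbol f_j,
   TOrc i ts : application of the oracle function symbol theta_i,
   TEq, TAnd : equality (≈) and conjunction (formulas are Boolean terms). *)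
Inductive term (T : theory) :=
| TVal of tval T
| TApp of isym T & seq (term T)
| TFun of nat & seq (term T)
| TOrc of nat & seq (term T)
| TEq  of term T & term T
| TAnd of term T & term T.

Arguments TVal {T}.
Arguments TApp {T}.
Arguments TFun {T}.
Arguments TOrc {T}.
Arguments TEq {T}.
Arguments TAnd {T}.

(* Interpretation of the uninterpreted symbols (the f's and the theta's). *)
Record model (T : theory) := Model {
  mf : nat -> seq (tval T) -> tval T;
  mo : nat -> seq (tval T) -> tval T
}.

(* A Definitional SMTO problem (f, theta, rho, J): f = f_0..f_{nf-1} with
   signatures fsig, theta = theta_0..theta_{nor-1} with signatures osig,
   the formula rho, and the functional oracles of the interfaces J_i
   (oracle i c = the output d of the oracle of J_i on input c). *)
Record problem (T : theory) := Problem {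
  nf     : nat;
  fsig   : nat -> seq (tsort T) * tsort T;
  nor    : nat;
  osig   : nat -> seq (tsort T) * tsort T;
  rho    : term T;
  oracle : nat -> seq (tval T) -> tval T
}.

Section SMTO.
Variable T : theory.
Variable P : problem T.

Local Notation term := (term T).
Local Notation V := (tval T).
Local Notation vtt := (tvtt T).
Local Notation vff := (tvff T).

Definition vbool (b : bool) : V := if b then vtt else vff.

Fixpoint sort_of (t : term) : option (tsort T) :=
  match t with
  | TVal v => Some (sortOf v)
  | TApp g ts => if map sort_of ts == map Some (isig g).1
                 then Some (isig g).2 else None
  | TFun j ts => if map sort_of ts == map Some (fsig P j).1
                 then Some (fsig P j).2 else None
  | TOrc i ts => if map sort_of ts == map Some (osig P i).1
                 then Some (osig P i).2 else None
  | TEq t u => match sort_of t, sort_of u with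
               | Some a, Some b => if a == b then Some (tsB T) else None
               | _, _ => None
               end
  | TAnd t u => if (sort_of t == Some (tsB T)) && (sort_of u == Some (tsB T))
                then Some (tsB T) else None
  end.

Fixpoint syms_ok (t : term) : bool :=
  match t with
  | TVal _ => true
  | TApp _ ts => all syms_ok ts
  | TFun j ts => (j < nf P) && all syms_ok ts
  | TOrc i ts => (i < nor P) && all syms_ok ts
  | TEq t u => syms_ok t && syms_ok u
  | TAnd t u => syms_ok t && syms_ok u
  end.

Definition model_ok (M : model T) : Prop :=
  (forall j vs, map (@sortOf T) vs = (fsig P j).1 ->
                sortOf (mf M j vs) = (fsig P j).2) /\
  (forall i vs, map (@sortOf T) vs = (osig P i).1 ->
                sortOf (mo M i vs) = (osig P i).2).

Fixpoint eval (M : model T) (t : term) : V :=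
  match t with
  | TVal v => v
  | TApp g ts => interp g (map (eval M) ts)
  | TFun j ts => mf M j (map (eval M) ts)
  | TOrc i ts => mo M i (map (eval M) ts)
  | TEq t u => vbool (eval M t == eval M u)
  | TAnd t u => vbool ((eval M t == vtt) && (eval M u == vtt))
  end.

(* T-satisfiability (theta treated as uninterpreted) *)
Definition satisfiable (phi : term) : Prop :=
  exists M, model_ok M /\ eval M phi = vtt.

Definition problem_ok : Prop :=
  [/\ sort_of (rho P) = Some (tsB T), syms_ok (rho P) &
      forall i vs, i < nor P -> map (@sortOf T) vs = (osig P i).1 ->
                   sortOf (oracle P i vs) = (osig P i).2].

Definition finite_domains : Prop :=
  forall i, i < nor P -> exists D : seq (seq V),
    forall cs, map (@sortOf T) cs = (osig P i).1 -> cs \in D.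

Definition solver_spec (solver : term -> option (model T)) : Prop :=
  forall phi, sort_of phi = Some (tsB T) ->
    (solver phi = None -> ~ satisfiable phi) /\
    (forall M, solver phi = Some M -> model_ok M /\ eval M phi = vtt).

(* partial evaluation <.> of a term after substituting f by f^M (given as mfM):
   every subterm built from an interpreted symbol (or an f_j, now interpreted
   by f^M) applied to values is evaluated; theta-applications are kept. *)
Fixpoint getvals (ts : seq term) : option (seq V) :=
  match ts with
  | [::] => Some [::]
  | TVal v :: ts' => omap (cons v) (getvals ts')
  | _ => None
  end.

Fixpoint peval (mfM : nat -> seq V -> V) (t : term) : term :=
  match t with
  | TVal v => TVal v
  | TApp g ts => let ts' := map (peval mfM) ts in
                 match getvals ts' with
                 | Some vs => TVal (interp g vs)
                 | None => TApp g ts'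
                 end
  | TFun j ts => let ts' := map (peval mfM) ts in
                 match getvals ts' with
                 | Some vs => TVal (mfM j vs)
                 | None => TFun j ts'
                 end
  | TOrc i ts => TOrc i (map (peval mfM) ts)
  | TEq t u => match peval mfM t, peval mfM u with
               | TVal a, TVal b => TVal (vbool (a == b))
               | t', u' => TEq t' u'
               end
  | TAnd t u => match peval mfM t, peval mfM u with
                | TVal a, TVal b => TVal (vbool ((a == vtt) && (b == vtt)))
                | t', u' => TAnd t' u'
                end
  end.

Fixpoint inl (t : term) (ts : seq term) : Prop :=
  match ts with [::] => False | u :: ts' => u = t \/ inl t ts' end.

Inductive occurs (s : term) : term -> Prop :=
| occ_here : occurs s s
| occ_app g ts t : inl t ts -> occurs s t -> occurs s (TApp g ts)
| occ_fun j ts t : inl t ts -> occurs s t -> occurs s (TFun j ts)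
| occ_orc i ts t : inl t ts -> occurs s t -> occurs s (TOrc i ts)
| occ_eql t u : occurs s t -> occurs s (TEq t u)
| occ_eqr t u : occurs s u -> occurs s (TEq t u)
| occ_andl t u : occurs s t -> occurs s (TAnd t u)
| occ_andr t u : occurs s u -> occurs s (TAnd t u).

(* repl1 s r e e' : e' is e[r] where e = e[s] (one occurrence of s replaced) *)
Inductive repl1 (s r : term) : term -> term -> Prop :=
| repl_here : repl1 s r s r
| repl_app g l1 t t' l2 : repl1 s r t t' ->
    repl1 s r (TApp g (l1 ++ t :: l2)) (TApp g (l1 ++ t' :: l2))
| repl_fun j l1 t t' l2 : repl1 s r t t' ->
    repl1 s r (TFun j (l1 ++ t :: l2)) (TFun j (l1 ++ t' :: l2))
| repl_orc i l1 t t' l2 : repl1 s r t t' ->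
    repl1 s r (TOrc i (l1 ++ t :: l2)) (TOrc i (l1 ++ t' :: l2))
| repl_eql t t' u : repl1 s r t t' -> repl1 s r (TEq t u) (TEq t' u)
| repl_eqr t u u' : repl1 s r u u' -> repl1 s r (TEq t u) (TEq t u')
| repl_andl t t' u : repl1 s r t t' -> repl1 s r (TAnd t u) (TAnd t' u)
| repl_andr t u u' : repl1 s r u u' -> repl1 s r (TAnd t u) (TAnd t u').

Definition ocall (i : nat) (c : seq V) : term := TOrc i (map TVal c).

Definition has_ocall (mu : term) : Prop := exists i c, occurs (ocall i c) mu.

(* the set A of assumptions theta_i(c) ≈ d, as a list of triples (i, c, d) *)
Definition asm := (nat * seq V * V)%type.

Definition asm_formula (a : asm) : term := TEq (ocall a.1.1 a.1.2) (TVal a.2).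

Definition rho_and (A : seq asm) : term :=
  foldl (fun acc a => TAnd acc (asm_formula a)) (rho P) A.

Fixpoint lookupA (A : seq asm) (i : nat) (c : seq V) : option V :=
  match A with
  | [::] => None
  | a :: A' => if (a.1.1 == i) && (a.1.2 == c) then Some a.2 else lookupA A' i c
  end.

Inductive state :=
| Outer of seq asm                          (* start of a loop iteration *)
| Inner of seq asm & model T & term         (* in the while-loop of step 3 *)
| RetUnsat of seq asm                       (* returned (UNSAT, A) *)
| RetSat of seq asm & (nat -> seq V -> V).  (* returned (SAT, A, M|_f) *)

Variable solver : term -> option (model T).

Inductive step : state -> state -> Prop :=
| st_unsat A : solver (rho_and A) = None -> step (Outer A) (RetUnsat A)
| st_sat A M : solver (rho_and A) = Some M ->
    step (Outer A) (Inner A M (peval (mf M) (rho P)))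
| st_known A M mu mu' i c d :
    lookupA A i c = Some d -> repl1 (ocall i c) (TVal d) mu mu' ->
    step (Inner A M mu) (Inner A M (peval (mf M) mu'))
| st_call A M mu mu' i c :
    lookupA A i c = None ->
    repl1 (ocall i c) (TVal (oracle P i c)) mu mu' ->
    step (Inner A M mu)
         (Inner (rcons A (i, c, oracle P i c)) M (peval (mf M) mu'))
| st_true A M mu : ~ has_ocall mu -> mu = TVal vtt ->
    step (Inner A M mu) (RetSat A (mf M))
| st_next A M mu : ~ has_ocall mu -> mu <> TVal vtt ->
    step (Inner A M mu) (Outer A).

(* Algorithm 1 terminates: every run from the initial state (A := true) is
   finite, i.e. the initial state is accessible for the converse of step. *)
Definition terminates : Prop :=
  Acc (fun s' s => step s s') (Outer [::]).

End SMTO.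

(* Main.v *)
Require Import Defs.
From mathcomp Require Import all_boot.
From Stdlib Require Import Lia.
From mathcomp Require Import zify.
Set Implicit Arguments.
Unset Strict Implicit.
Unset Printing Implicit Defensive.

Lemma term_ind' (T : theory) (Pr : term T -> Prop) :
  (forall v, Pr (TVal v)) ->
  (forall g ts, (forall t, inl t ts -> Pr t) -> Pr (TApp g ts)) ->
  (forall g ts, (forall t, inl t ts -> Pr t) -> Pr (TFun g ts)) ->
  (forall g ts, (forall t, inl t ts -> Pr t) -> Pr (TOrc g ts)) ->
  (forall t u, Pr t -> Pr u -> Pr (TEq t u)) ->
  (forall t u, Pr t -> Pr u -> Pr (TAnd t u)) -> forall t, Pr t.
Proof.
move=> HV HA HF HO HE HN; fix IH 1.
case=> [v|g ts|g ts|g ts|t u|t u].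
- exact: HV.
- apply: HA; move: ts; fix IHl 1; case=> [|t0 ts] t; first case. 
  case=> [<-|H]; first exact: IH. exact: IHl _ _ H.
- apply: HF; move: ts; fix IHl 1; case=> [|t0 ts] t; first case. 
  case=> [<-|H]; first exact: IH. exact: IHl _ _ H.
- apply: HO; move: ts; fix IHl 1; case=> [|t0 ts] t; first case. 
  case=> [<-|H]; first exact: IH. exact: IHl _ _ H.
- exact: HE.
- exact: HN.
Qed.



Lemma inl_map (T : theory) (h : term T -> term T) t ts :
  inl t ts -> inl (h t) (map h ts).
Proof. elim: ts => [|u ts IH] //= [<-|H]; [by left|right; exact: IH]. Qed.

Lemma inl_map_inv (T : theory) (h : term T -> term T) t' ts :
  inl t' (map h ts) -> exists t, inl t ts /\ t' = h t.
Proof.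
elim: ts => [|u ts IH] //= [<-|H]; first by exists u; split=> //; left.
by case: (IH H) => t [H1 H2]; exists t; split=> //; right.
Qed.

Lemma inl_all (T : theory) (p : pred (term T)) t ts : inl t ts -> all p ts -> p t.
Proof. elim: ts => [|u ts IH] //= [<-|H] /andP[H1 H2] //; exact: IH. Qed.

Lemma map_ext_inl (T : theory) (A : Type) (h : term T -> A) (k : term T -> term T) ts :
  (forall t, inl t ts -> h (k t) = h t) -> map h (map k ts) = map h ts.
Proof.
elim: ts => [|u ts IH] //= H; rewrite H; last by left.
by rewrite IH // => t Ht; apply: H; right.
Qed.

Lemma getvals_map (T : theory) (ts : seq (term T)) vs :
  getvals ts = Some vs -> ts = map TVal vs.
Proof.
elim: ts vs => [|[v|g l|j l|i l|a b|a b] ts IH] vs //=; first by case=> <-.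
case E: (getvals ts) => [vs'|] //= [<-]; by rewrite (IH _ E).
Qed.

Lemma getvals_TVal (T : theory) (vs : seq (Defs.tval T)) : getvals (map TVal vs) = Some vs.
Proof. by elim: vs => [|v vs IH] //=; rewrite IH. Qed.

Lemma getvals_all (T : theory) (ts : seq (term T)) :
  (forall t, inl t ts -> exists v, t = TVal v) -> exists vs, getvals ts = Some vs.
Proof.
elim: ts => [|u ts IH] H; first by exists [::].
case: (H u); first by left. move=> v ->.
case: IH => [t Ht|vs E]; first by apply: H; right.
by exists (v :: vs); rewrite /= E.
Qed.

Lemma sort_inl (T : theory) (A : Type) (f : term T -> option A) (l : seq A) t ts :
  inl t ts -> map f ts = map Some l -> exists x, f t = Some x.
Proof.
elim: ts l => [|u ts IH] [|a l] //= [<-|H] [E1 E2]; first by exists a.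
exact: IH H E2.
Qed.

Lemma map_Some_inj (A : Type) (l1 l2 : seq A) : map Some l1 = map Some l2 -> l1 = l2.
Proof. by move/inj_map => -> // x y []. Qed.

Definition fT (T : theory) := nat -> seq (Defs.tval T) -> Defs.tval T.

Lemma peval_TApp (T : theory) (f : fT T) g ts :
  (getvals (map (peval f) ts) = None /\ peval f (TApp g ts) = TApp g (map (peval f) ts)) \/
  exists vs, getvals (map (peval f) ts) = Some vs /\ peval f (TApp g ts) = TVal (interp g vs).
Proof. rewrite /=; case: (getvals _) => [vs|]; [right; by exists vs | by left]. Qed.

Lemma peval_TFun (T : theory) (f : fT T) g ts :
  (getvals (map (peval f) ts) = None /\ peval f (TFun g ts) = TFun g (map (peval f) ts)) \/
  exists vs, getvals (map (peval f) ts) = Some vs /\ peval f (TFun g ts) = TVal (f g vs).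
Proof. rewrite /=; case: (getvals _) => [vs|]; [right; by exists vs | by left]. Qed.

Lemma peval_TEq (T : theory) (f : fT T) t u :
  peval f (TEq t u) = TEq (peval f t) (peval f u) \/
  exists a b, peval f t = TVal a /\ peval f u = TVal b /\
              peval f (TEq t u) = TVal (vbool T (a == b)).
Proof. rewrite /=; case: (peval f t) => *; case: (peval f u) => *; eauto 10. Qed.

Lemma peval_TAnd (T : theory) (f : fT T) t u :
  peval f (TAnd t u) = TAnd (peval f t) (peval f u) \/
  exists a b, peval f t = TVal a /\ peval f u = TVal b /\
              peval f (TAnd t u) = TVal (vbool T ((a == tvtt T) && (b == tvtt T))).
Proof. rewrite /=; case: (peval f t) => *; case: (peval f u) => *; eauto 10. Qed.

Lemma peval_eval (T : theory) (M : model T) t : eval M (peval (mf M) t) = eval M t.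
Proof.
elim/term_ind': t => [v|g ts IH|g ts IH|g ts IH|t u IH1 IH2|t u IH1 IH2] //.
- have E := map_ext_inl IH.
  case: (peval_TApp (mf M) g ts) => [[_ ->]|[vs [H ->]]] /=; first by rewrite E.
  by rewrite -E (getvals_map H) -map_comp map_id_in.
- have E := map_ext_inl IH.
  case: (peval_TFun (mf M) g ts) => [[_ ->]|[vs [H ->]]] /=; first by rewrite E.
  by rewrite -E (getvals_map H) -map_comp map_id_in.
- by rewrite /= (map_ext_inl IH).
- case: (peval_TEq (mf M) t u) => [->|[a [b [H1 [H2 ->]]]]] /=; first by rewrite IH1 IH2.
  by rewrite -IH1 -IH2 H1 H2.
- case: (peval_TAnd (mf M) t u) => [->|[a [b [H1 [H2 ->]]]]] /=; first by rewrite IH1 IH2.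
  by rewrite -IH1 -IH2 H1 H2.
Qed.

Lemma all_map_inl (T : theory) (p : pred (term T)) (k : term T -> term T) ts :
  (forall t, inl t ts -> p t -> p (k t)) -> all p ts -> all p (map k ts).
Proof.
elim: ts => [|u ts IH] //= H /andP[H1 H2]; apply/andP; split.
- by apply: H => //; left.
- by apply: IH => // t Ht; apply: H; right.
Qed.

Lemma peval_syms (T : theory) (P : problem T) (f : fT T) t :
  syms_ok P t -> syms_ok P (peval f t).
Proof.
elim/term_ind': t => [v|g ts IH|g ts IH|g ts IH|t u IH1 IH2|t u IH1 IH2] //.
- move=> H; simpl in H; have := all_map_inl IH H.
  by case: (peval_TApp f g ts) => [[_ ->]|[vs [_ ->]]].
- move=> H0; simpl in H0; case/andP: H0 => Hj H; have := all_map_inl IH H.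
  by case: (peval_TFun f g ts) => [[_ ->]|[vs [_ ->]]] //= ->; rewrite Hj.
- by move=> /= /andP[Hj H]; rewrite Hj (all_map_inl IH H).
- move=> H0; simpl in H0; case/andP: H0 => H1 H2.
  by case: (peval_TEq f t u) => [->|[a [b [_ [_ ->]]]]] //=; rewrite IH1 ?IH2.
- move=> H0; simpl in H0; case/andP: H0 => H1 H2.
  by case: (peval_TAnd f t u) => [->|[a [b [_ [_ ->]]]]] //=; rewrite IH1 ?IH2.
Qed.

Lemma sort_map_pres (T : theory) (A : Type) (g : term T -> option A) (k : term T -> term T) ts l :
  (forall t, inl t ts -> forall x, g t = Some x -> g (k t) = Some x) ->
  map g ts = map Some l -> map g (map k ts) = map Some l.
Proof.
elim: ts l => [|u ts IH] [|a l] //= H [E1 E2].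
rewrite (H u _ a E1); last by left.
by rewrite (IH l) // => t Ht; apply: H; right.
Qed.

Lemma vbool_sort (T : theory) b : theory_ok T -> sortOf (vbool T b) = tsB T.
Proof. by case=> H1 H2 _ _; case: b. Qed.

Lemma peval_sort (T : theory) (P : problem T) (M : model T) t x :
  theory_ok T -> model_ok P M ->
  sort_of P t = Some x -> sort_of P (peval (mf M) t) = Some x.
Proof.
move=> Tok [Mf Mo].
elim/term_ind': t x => [v|g ts IH|g ts IH|g ts IH|t u IH1 IH2|t u IH1 IH2] x //.
- rewrite [sort_of P (TApp _ _)]/=; case: eqP => // E [<-].
  have E' := sort_map_pres IH E.
  case: (peval_TApp (mf M) g ts) => [[_ ->]|[vs [H ->]]] /=; first by rewrite E' eqxx.
  have E2 : map (@sortOf T) vs = (isig g).1.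
    apply: map_Some_inj; rewrite -E' (getvals_map H) -!map_comp; exact: eq_map.
  by case: Tok => _ _ _ Hs; rewrite Hs.
- rewrite [sort_of P (TFun _ _)]/=; case: eqP => // E [<-].
  have E' := sort_map_pres IH E.
  case: (peval_TFun (mf M) g ts) => [[_ ->]|[vs [H ->]]] /=; first by rewrite E' eqxx.
  have E2 : map (@sortOf T) vs = (fsig P g).1.
    apply: map_Some_inj; rewrite -E' (getvals_map H) -!map_comp; exact: eq_map.
  by rewrite Mf // E2.
- rewrite /=; case: eqP => // E [<-].
  by rewrite (sort_map_pres IH E) eqxx.
- rewrite [sort_of P (TEq _ _)]/=; case E1: (sort_of P t) => [a|] //; case E2: (sort_of P u) => [b|] //.
  case: eqP => // Eab [<-].
  case: (peval_TEq (mf M) t u) => [->|[a' [b' [_ [_ ->]]]]] /=; last by rewrite vbool_sort.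
  by rewrite (IH1 _ E1) (IH2 _ E2) Eab eqxx.
- rewrite [sort_of P (TAnd _ _)]/=; case: ifP => // /andP[/eqP E1 /eqP E2] [<-].
  case: (peval_TAnd (mf M) t u) => [->|[a' [b' [_ [_ ->]]]]] /=; last by rewrite vbool_sort.
  by rewrite (IH1 _ E1) (IH2 _ E2) eqxx.
Qed.

Fixpoint cnt (T : theory) (t : term T) : nat :=
  match t with
  | TVal _ => 0
  | TApp _ ts => sumn (map (@cnt T) ts)
  | TFun _ ts => sumn (map (@cnt T) ts)
  | TOrc _ ts => (sumn (map (@cnt T) ts)).+1
  | TEq t u => cnt t + cnt u
  | TAnd t u => cnt t + cnt u
  end.

Lemma sumn_le_inl (T : theory) (k : term T -> term T) ts :
  (forall t, inl t ts -> cnt (k t) <= cnt t) ->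
  sumn (map (@cnt T) (map k ts)) <= sumn (map (@cnt T) ts).
Proof.
elim: ts => [|u ts IH] //= H; apply: leq_add; first by apply: H; left.
by apply: IH => t Ht; apply: H; right.
Qed.

Lemma cnt_peval (T : theory) (f : fT T) t : cnt (peval f t) <= cnt t.
Proof.
elim/term_ind': t => [v|g ts IH|g ts IH|g ts IH|t u IH1 IH2|t u IH1 IH2] //.
- by case: (peval_TApp f g ts) => [[_ ->]|[vs [_ ->]]] //=; apply: sumn_le_inl.
- by case: (peval_TFun f g ts) => [[_ ->]|[vs [_ ->]]] //=; apply: sumn_le_inl.
- by rewrite /= ltnS; apply: sumn_le_inl.
- by case: (peval_TEq f t u) => [->|[a [b [_ [_ ->]]]]] //=; apply: leq_add.
- by case: (peval_TAnd f t u) => [->|[a [b [_ [_ ->]]]]] //=; apply: leq_add.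
Qed.

Lemma peval_noocall (T : theory) (f : fT T) t :
  ~ has_ocall (peval f t) -> exists v, peval f t = TVal v.
Proof.
elim/term_ind': t => [v|g ts IH|g ts IH|g ts IH|t u IH1 IH2|t u IH1 IH2] Hno.
- by exists v.
- case: (peval_TApp f g ts) => [[Hg E]|[vs [_ ->]]]; last by exists (interp g vs).
  exfalso; case: (getvals_all (ts := map (peval f) ts)) => [t' /inl_map_inv [t [Ht ->]]|vs]; last by rewrite Hg.
  apply: IH => // -[i [c Hc]]; apply: Hno; exists i, c; rewrite E.
  by apply: occ_app Hc; apply: inl_map.
- case: (peval_TFun f g ts) => [[Hg E]|[vs [_ ->]]]; last by exists (f g vs).
  exfalso; case: (getvals_all (ts := map (peval f) ts)) => [t' /inl_map_inv [t [Ht ->]]|vs]; last by rewrite Hg.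
  apply: IH => // -[i [c Hc]]; apply: Hno; exists i, c; rewrite E.
  by apply: occ_fun Hc; apply: inl_map.
- exfalso. have E : peval f (TOrc g ts) = TOrc g (map (peval f) ts) by [].
  case: (getvals_all (ts := map (peval f) ts)) => [t' /inl_map_inv [t [Ht ->]]|vs Hg].
    apply: IH => // -[i [c Hc]]; apply: Hno; exists i, c; rewrite E.
    by apply: occ_orc Hc; apply: inl_map.
  apply: Hno; exists g, vs; rewrite E (getvals_map Hg); exact: occ_here.
- case: (peval_TEq f t u) => [E|[a [b [_ [_ ->]]]]]; last by eexists.
  case: IH1 => [[i [c Hc]]|a Ha]; first by apply: Hno; exists i, c; rewrite E; apply: occ_eql.
  case: IH2 => [[i [c Hc]]|b Hb]; first by apply: Hno; exists i, c; rewrite E; apply: occ_eqr.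
  by rewrite /= Ha Hb; eexists.
- case: (peval_TAnd f t u) => [E|[a [b [_ [_ ->]]]]]; last by eexists.
  case: IH1 => [[i [c Hc]]|a Ha]; first by apply: Hno; exists i, c; rewrite E; apply: occ_andl.
  case: IH2 => [[i [c Hc]]|b Hb]; first by apply: Hno; exists i, c; rewrite E; apply: occ_andr.
  by rewrite /= Ha Hb; eexists.
Qed.

Lemma inl_mid (T : theory) (t : term T) l1 l2 : inl t (l1 ++ t :: l2).
Proof. by elim: l1 => [|u l1 IH] /=; [left | right]. Qed.

Lemma repl_occurs (T : theory) (s r e e' : term T) : repl1 s r e e' -> occurs s e.
Proof.
elim=> {e e'} [|g l1 t t' l2 _ IH|g l1 t t' l2 _ IH|g l1 t t' l2 _ IH|t t' u _ IH|t u u' _ IH|t t' u _ IH|t u u' _ IH].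
- exact: occ_here.
- exact: occ_app (inl_mid _ _ _) IH.
- exact: occ_fun (inl_mid _ _ _) IH.
- exact: occ_orc (inl_mid _ _ _) IH.
- exact: occ_eql.
- exact: occ_eqr.
- exact: occ_andl.
- exact: occ_andr.
Qed.

Lemma repl_eval (T : theory) (M : model T) (s r e e' : term T) :
  repl1 s r e e' -> eval M s = eval M r -> eval M e' = eval M e.
Proof.
move=> H Hs; elim: H => {e e'} //= *; by rewrite ?map_cat /= ?(IH) ; congruence.
Qed.

Lemma repl_sort (T : theory) (P : problem T) (s r e e' : term T) :
  repl1 s r e e' -> sort_of P s = sort_of P r -> sort_of P e' = sort_of P e.
Proof.
move=> H Hs; elim: H => {e e'} //= [g l1 t t' l2 _ IH|g l1 t t' l2 _ IH|g l1 t t' l2 _ IH|t t' u _ IH|t u u' _ IH|t t' u _ IH|t u u' _ IH];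
  by rewrite ?map_cat /= IH.
Qed.

Lemma repl_syms (T : theory) (P : problem T) (s r e e' : term T) :
  repl1 s r e e' -> syms_ok P s = syms_ok P r -> syms_ok P e' = syms_ok P e.
Proof.
move=> H Hs; elim: H => {e e'} //= [g l1 t t' l2 _ IH|g l1 t t' l2 _ IH|g l1 t t' l2 _ IH|t t' u _ IH|t u u' _ IH|t t' u _ IH|t u u' _ IH];
  by rewrite ?all_cat /= IH.
Qed.

Lemma repl_cnt (T : theory) (s r e e' : term T) :
  repl1 s r e e' -> cnt e' + cnt s = cnt e + cnt r.
Proof.
elim=> {e e'} /= [|g l1 t t' l2 _ IH|g l1 t t' l2 _ IH|g l1 t t' l2 _ IH|t t' u _ IH|t u u' _ IH|t t' u _ IH|t u u' _ IH];
  rewrite ?map_cat ?sumn_cat /=; lia.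
Qed.

Lemma occurs_sort (T : theory) (P : problem T) (s t : term T) :
  occurs s t -> forall x, sort_of P t = Some x -> exists y, sort_of P s = Some y.
Proof.
elim=> {t} [|g ts t Ht _ IH|g ts t Ht _ IH|g ts t Ht _ IH|t u _ IH|t u _ IH|t u _ IH|t u _ IH] x /=.
- by exists x.
- case: eqP => // E _; case: (sort_inl Ht E) => y; exact: IH.
- case: eqP => // E _; case: (sort_inl Ht E) => y; exact: IH.
- case: eqP => // E _; case: (sort_inl Ht E) => y; exact: IH.
- by case E: (sort_of P t) => [a|] //; case: (sort_of P u) => // b _; exact: IH E.
- by case: (sort_of P t) => // a; case E: (sort_of P u) => [b|] // _; exact: IH E.
- by case: ifP => // /andP[/eqP E _] _; exact: IH E.
- by case: ifP => // /andP[_ /eqP E] _; exact: IH E.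
Qed.

Lemma occurs_syms (T : theory) (P : problem T) (s t : term T) :
  occurs s t -> syms_ok P t -> syms_ok P s.
Proof.
elim=> {t} [|g ts t Ht _ IH|g ts t Ht _ IH|g ts t Ht _ IH|t u _ IH|t u _ IH|t u _ IH|t u _ IH] //=.
- by move=> H; apply: IH; exact: (inl_all Ht H).
- by case/andP=> _ H; apply: IH; exact: (inl_all Ht H).
- by case/andP=> _ H; apply: IH; exact: (inl_all Ht H).
- by case/andP=> H1 H2; apply: IH.
- by case/andP=> H1 H2; apply: IH.
- by case/andP=> H1 H2; apply: IH.
- by case/andP=> H1 H2; apply: IH.
Qed.

Definition keys (T : theory) (A : seq (asm T)) : seq (nat * seq (Defs.tval T)) :=
  map (fun a => (a.1.1, a.1.2)) A.

Definition Inv (T : theory) (P : problem T) (A : seq (asm T)) : Prop :=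
  uniq (keys A) /\ forall a, a \in A ->
    [/\ a.1.1 < nor P, map (@sortOf T) a.1.2 = (osig P a.1.1).1 &
        sortOf a.2 = (osig P a.1.1).2].

Lemma lookupA_None (T : theory) (A : seq (asm T)) i c :
  lookupA A i c = None -> (i, c) \notin keys A.
Proof.
elim: A => [|[[j c'] d] A IH] //=; case: ifP => // /negbT H /IH.
rewrite in_cons negb_or => ->; rewrite andbT.
by apply: contra H => /eqP [-> ->]; rewrite !eqxx.
Qed.

Lemma lookupA_Some (T : theory) (A : seq (asm T)) i c d :
  lookupA A i c = Some d -> (i, c, d) \in A.
Proof.
elim: A => [|[[j c'] d'] A IH] //=; case: ifP => [/andP[/eqP -> /eqP ->] [->]|_ /IH H].
- exact: mem_head.
- by rewrite in_cons H orbT.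
Qed.

Lemma ocall_sort (T : theory) (P : problem T) i c y :
  sort_of P (ocall i c) = Some y -> map (@sortOf T) c = (osig P i).1 /\ y = (osig P i).2.
Proof.
rewrite /ocall /=; case: eqP => // E [<-]; split=> //.
by apply: map_Some_inj; rewrite -E -!map_comp.
Qed.

Lemma eval_ocall (T : theory) (M : model T) i c : eval M (ocall i c) = mo M i c.
Proof. by rewrite /ocall /= -map_comp map_id. Qed.

Lemma vbool_tt (T : theory) b : theory_ok T -> vbool T b = tvtt T -> b.
Proof. by case=> _ _ H _; case: b => //= E; rewrite E eqxx in H. Qed.

Lemma rho_and_eval (T : theory) (P : problem T) (M : model T) A :
  theory_ok T -> eval M (rho_and P A) = tvtt T ->
  eval M (rho P) = tvtt T /\ forall a, a \in A -> eval M (asm_formula a) = tvtt T.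
Proof.
move=> Tok; rewrite /rho_and.
suff H : forall acc, eval M (foldl (fun acc a => TAnd acc (asm_formula a)) acc A) = tvtt T ->
  eval M acc = tvtt T /\ forall a, a \in A -> eval M (asm_formula a) = tvtt T by apply: H.
elim: A => [|a A IH] acc /=; first by split.
move/IH => [/= /(vbool_tt Tok) /andP[/eqP H1 /eqP H2] H3]; split=> // b.
by rewrite in_cons => /orP[/eqP ->|/H3].
Qed.

Lemma rho_and_sort (T : theory) (P : problem T) A :
  sort_of P (rho P) = Some (tsB T) -> Inv P A -> sort_of P (rho_and P A) = Some (tsB T).
Proof.
move=> Hr [_ HA]; rewrite /rho_and.
elim: A (rho P) Hr HA => [|a A IH] acc //= Hacc HA.
apply: IH; last by move=> b Hb; apply: HA; rewrite in_cons Hb orbT.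
case: (HA a (mem_head _ _)) => _ E1 E2.
have E3 : map (sort_of P) (map TVal a.1.2) = map Some (osig P a.1.1).1.
  by rewrite -E1 -!map_comp.
rewrite [sort_of P (TAnd _ _)]/= Hacc /asm_formula /ocall /=. by rewrite E3 eqxx E2 !eqxx.
Qed.

Lemma finite_keys (T : theory) (P : problem T) :
  finite_domains P -> exists K : seq (nat * seq (Defs.tval T)),
    forall i c, i < nor P -> map (@sortOf T) c = (osig P i).1 -> (i, c) \in K.
Proof.
move=> Fin.
suff H : forall n, n <= nor P -> exists K : seq (nat * seq (Defs.tval T)),
    forall i c, i < n -> map (@sortOf T) c = (osig P i).1 -> (i, c) \in K by exact: H.
elim=> [|n IH] Hn; first by exists [::].
case: IH => [|K HK]; first exact: ltnW.
case: (Fin n Hn) => D HD.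
exists (K ++ map (pair n) D) => i c; rewrite ltnS leq_eqVlt => /orP[/eqP ->|Hi] Hc.
- by rewrite mem_cat; apply/orP; right; apply: map_f; apply: HD.
- by rewrite mem_cat (HK i c Hi Hc).
Qed.

Lemma asm_sat (T : theory) (M : model T) i c d :
  theory_ok T -> eval M (asm_formula (i, c, d)) = tvtt T -> mo M i c = d.
Proof.
move=> Tok; rewrite /asm_formula /= => /(vbool_tt Tok) /eqP <-.
by rewrite -eval_ocall.
Qed.

Theorem mainTheorem3 (T : theory) (P : problem T)
    (solver : term T -> option (model T)) :
  theory_ok T ->
  problem_ok P ->
  solver_spec P solver ->
  finite_domains P ->
  terminates P solver.
Proof.
move=> Tok [Prs Prsy Por] Ss Fin.
case: (finite_keys Fin) => K HK.
have sizeK : forall A, Inv P A -> size A <= size K.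
  move=> A [Hu HA]; have -> : size A = size (keys A) by rewrite size_map.
  apply: (uniq_leq_size Hu) => -[i c] /mapP [a Ha [-> ->]].
  by case: (HA a Ha) => H1 H2 _; apply: HK.
set R := fun s' s => step P solver s s'.
suff H : forall n A, Inv P A -> size K - size A <= n -> Acc R (Outer A).
  by apply: (H (size K)); [split=> // | rewrite subn0].
suff Ostep : forall A, Inv P A ->
    (forall A', Inv P A' -> size A < size A' -> Acc R (Outer A')) -> Acc R (Outer A).
  elim=> [|n IHn] A HA Hn; apply: (Ostep A HA) => A1 HA1 Hs.
  - have h := sizeK _ HA1; clear -h Hn Hs; exfalso; lia.
  - apply: IHn => //; have h := sizeK _ HA1; clear -h Hn Hs; lia.
move=> A HA HO; constructor=> s' Hs; rewrite /R in Hs; inversion Hs; subst.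
- by constructor=> s'' H'; inversion H'.
have [Mok Meval] := (Ss _ (rho_and_sort Prs HA)).2 M H0.
have [Mrho Masm] := rho_and_eval Tok Meval.
suff Inn : forall m A' mu, cnt mu < m -> Inv P A' -> (A' = A \/ size A < size A') ->
    (A' = A -> eval M mu = tvtt T) -> sort_of P mu = Some (tsB T) -> syms_ok P mu ->
    (exists x, mu = peval (mf M) x) -> Acc R (Inner A' M mu).
  apply: (Inn (cnt (peval (mf M) (rho P))).+1).
  - exact: ltnSn.
  - exact: HA.
  - by left.
  - by move=> _; rewrite peval_eval.
  - exact: peval_sort.
  - exact: peval_syms.
  - by exists (rho P).
elim=> [|m IHm] A' mu Hc; first by [].
move=>  HA' Hsz Hev Hso Hsy [x Hx].
constructor=> s3 Hst; rewrite /R in Hst.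
inversion Hst as [| | A0 M0 mu0 mu1 i c d Hl Hr | A0 M0 mu0 mu1 i c Hl Hr | A0 M0 mu0 Hno Htt | A0 M0 mu0 Hno Hnt]; subst.
- have Hocc := repl_occurs Hr.
  have [y Hy] := occurs_sort Hocc Hso; have [Hcs Hy'] := ocall_sort Hy.
  have HAd := lookupA_Some Hl; have [_ _ Hd] := HA'.2 _ HAd.
  apply: IHm => //.
  + have := repl_cnt Hr; have := cnt_peval (mf M) mu1.
    have h0 : cnt (TVal d) = 0 by [].
    have h1 : cnt (ocall i c) = (sumn (map (@cnt T) (map TVal c))).+1 by [].
    rewrite h0 h1; clear -Hc; lia.
  + move=> E; rewrite peval_eval (repl_eval Hr); first exact: Hev.
    by rewrite eval_ocall /=; apply: asm_sat Tok _; apply: Masm; rewrite -E.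
  + apply: peval_sort => //; rewrite (repl_sort Hr) // Hy Hy' /=; by rewrite Hd.
  + apply: peval_syms; rewrite (repl_syms Hr) //.
    by rewrite (occurs_syms Hocc Hsy).
  + by exists mu1.
- have Hocc := repl_occurs Hr.
  have [y Hy] := occurs_sort Hocc Hso; have [Hcs Hy'] := ocall_sort Hy.
  have Hi : i < nor P by move: (occurs_syms Hocc Hsy) => /= /andP[].
  have Hsz' : size A < size (rcons A' (i, c, oracle P i c)).
    by rewrite size_rcons; case: Hsz => [->|H]; [exact: ltnSn | exact: ltnW].
  apply: IHm.
  + have := repl_cnt Hr; have := cnt_peval (mf M) mu1.
    have h0 : cnt (TVal (oracle P i c)) = 0 by [].
    have h1 : cnt (ocall i c) = (sumn (map (@cnt T) (map TVal c))).+1 by [].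
    rewrite h0 h1; clear -Hc; lia.
  + split.
    * rewrite /keys map_rcons rcons_uniq HA'.1 andbT.
      exact: lookupA_None Hl.
    * move=> a; rewrite mem_rcons in_cons => /orP[/eqP ->|Ha]; last exact: HA'.2.
      by split=> //=; apply: Por.
  + by right.
  + move=> E; exfalso; move: Hsz'; rewrite E ltnn; done.
  + apply: peval_sort => //; rewrite (repl_sort Hr) // Hy Hy' /=; by rewrite Por.
  + apply: peval_syms; rewrite (repl_syms Hr) //.
    by rewrite (occurs_syms Hocc Hsy).
  + by exists mu1.
- by constructor=> s4 H4; inversion H4.
- case: Hsz => [E|Hlt]; last exact: HO.
  exfalso; subst A'.
  have [v Hv] := peval_noocall Hno.
  apply: Hnt; rewrite Hv; have := Hev erefl; rewrite Hv /= => ->; done.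
Qed.
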